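(* Let $n\ge2$ and $k\ge1$ be integers, and let $c(n-1,k)$ be the number of Young diagrams fitting in the staircase shape $(n-1,n-2,\dots,1)$ that have exactly $k$ corners $(i,j)$ satisfying $i+j<n$. Then $$c(n-1,k)=\sum_{i=1}^{n-1-k}\frac{i}{n-i}\binom{n-i}{k}\binom{n-1}{k+i}.$$ Furthermore, there are exactly $2^{n-1}$ Young diagrams fitting in $(n-1,n-2,\dots,1)$ that have no corner $(i,j)$ with $i+j<n$ (i.e. all of whose corners lie on the diagonal $i+j=n$; the empty diagram is included).
   Context: Young diagrams are drawn in English notation: the diagram of a partition $\lambda=(\lambda_1\ge\lambda_2\ge\dots)$ is the set of cells $(i,j)$ with $1\le j\le\lambda_i$, row $i$ counted from the top and column $j$ from the left. It fits in $(n-1,n-2,\dots,1)$ if $\lambda_i\le n-i$ for all $i$. A corner of the diagram is a cell $(i,j)$ of it such that neither $(i+1,j)$ nor $(i,j+1)$ belongs to the diagram. *)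

(* Defs.v *)
From mathcomp Require Import all_boot all_order all_algebra.
Set Implicit Arguments. Unset Strict Implicit. Unset Printing Implicit Defensive.

(* A Young diagram fitting in the staircase (n-1, n-2, ..., 1) is encoded by
   its row lengths lambda_1, ..., lambda_(n-1): the function l : 'I_(n-1) -> 'I_n
   with l i = lambda_(i+1) (rows beyond n-1 are empty). *)
Definition diagram n := {ffun 'I_(n - 1) -> 'I_n}.

(* lambda_i for a 1-indexed row i (0 outside rows 1..n-1). *)
Definition rowlen n (l : diagram n) (i : nat) : nat :=
  if i is i'.+1 then
    (if insub i' is Some r then nat_of_ord (l r) else 0)
  else 0.

Definition in_staircase n (l : diagram n) : bool :=
  [forall i : 'I_(n - 1), (l i <= n - i.+1)%N] &&
  [forall i : 'I_(n - 1), forall j : 'I_(n - 1), (i <= j)%N ==> (l j <= l i)%N].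

(* cell (i,j) (English notation, 1-indexed) belongs to the diagram *)
Definition in_diag n (l : diagram n) (i j : nat) : bool :=
  (1 <= j)%N && (j <= rowlen l i)%N.

Definition is_corner n (l : diagram n) (i j : nat) : bool :=
  [&& in_diag l i j, ~~ in_diag l i.+1 j & ~~ in_diag l i j.+1].

(* number of corners (i,j) with i + j < n (cells of the diagram have i,j < n) *)
Definition low_corners n (l : diagram n) : nat :=
  #|[set p : 'I_n * 'I_n | is_corner l p.1 p.2 && (p.1 + p.2 < n)%N]|.

Definition c_count n k : nat :=
  #|[set l : diagram n | in_staircase l && (low_corners l == k)]|.

(* Main.v *)
Require Import Defs.
From mathcomp Require Import all_boot all_order all_algebra.
From mathcomp Require Import zify ring lra.
Import GRing.Theory Num.Theory.
Set Implicit Arguments. Unset Strict Implicit. Unset Printing Implicit Defensive.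

Fixpoint vd (s : seq nat) : bool :=
  if s is v :: s' then [&& head 0 s' <= v, v <= (size s').+1 & vd s'] else true.
Fixpoint kk (s : seq nat) : nat :=
  if s is v :: s' then ((head 0 s' < v) && (v < (size s').+1)) + kk s' else 0.
Fixpoint zz (s : seq nat) : nat :=
  if s is v :: s' then ((head 0 s' < v) && (v == (size s').+1)) + zz s' else 0.
Fixpoint stairs (p : nat) : seq (seq nat) :=
  if p is p'.+1 then
    [seq v :: s | s <- stairs p', v <- iota (head 0 s) (p'.+2 - head 0 s)]
  else [:: [::]].

Lemma vd_head s : vd s -> head 0 s <= size s.
Proof. by case: s => //= v s /and3P[]. Qed.

Lemma mem_stairs p s : (s \in stairs p) = (size s == p) && vd s.
Proof.
elim: p s => [|p IH] s /=.
  by rewrite inE; case: s.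
apply/allpairsPdep/idP.
  move=> [s' [v [Hs' Hv ->]]].
  move: Hs'; rewrite IH => /andP[/eqP Hsz Hvd].
  rewrite mem_iota in Hv.
  have := vd_head Hvd; rewrite Hsz => Hh.
  rewrite /= Hsz eqxx Hvd /=.
  apply/andP; split; lia.
case: s => // v s /andP[/=]; rewrite eqSS => /eqP Hsz /and3P[H1 H2 H3].
exists s, v; split => //.
  by rewrite IH Hsz eqxx.
rewrite mem_iota; have := vd_head H3; rewrite Hsz => Hh.
apply/andP; split; first by [].
rewrite Hsz in H2; lia.
Qed.

Lemma uniq_stairs p : uniq (stairs p).
Proof.
elim: p => [|p IH] //=.
apply: allpairs_uniq_dep => //.
  by move=> s _; apply: iota_uniq.
move=> [s1 v1] [s2 v2] _ _ /= [-> ->]. by [].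
Qed.

Definition W p r k z := \sum_(s <- stairs p) ((kk s == k) && (zz s == z)) * 'C(p - head 0 s, r).
Definition Wd p r k z := if k is k'.+1 then W p r k' z else 0.
Definition Zd p r k z := if z is z'.+1 then W p r k z' else 0.

Lemma Gsum a b r : \sum_(v <- iota b a) 'C(a + b - v, r) = \sum_(d < a) 'C(d.+1, r).
Proof.
elim: a b => [|a IH] b; first by rewrite big_nil big_ord0.
rewrite /= big_cons big_ord_recr /= addnK.
have -> : a.+1 + b = a + b.+1 by rewrite addSnnS.
by rewrite IH addnC.
Qed.

Lemma hockey a r : \sum_(d < a) 'C(d.+1, r.+1) = 'C(a.+1, r.+2).
Proof.
elim: a => [|a IH]; first by rewrite big_ord0.
by rewrite big_ord_recr /= IH [in RHS]binS addnC.
Qed.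

Lemma sum1 a : \sum_(d < a) 'C(d.+1, 0) = a.
Proof. by rewrite (eq_bigr (fun _ => 1)) ?sum1_card ?card_ord // => i _; rewrite bin0. Qed.

Lemma Wrec_gen p r k z :
  W p.+1 r k z = \sum_(s <- stairs p)
    ( ((kk s == k) && (zz s == z)) * 'C((p - head 0 s).+1, r)
    + (((kk s).+1 == k) && (zz s == z)) * \sum_(d < p - head 0 s) 'C(d.+1, r)
    + ((kk s == k) && ((zz s).+1 == z)) * (r == 0)).
Proof.
rewrite /W /= big_allpairs_dep; apply: eq_big_seq => s.
rewrite mem_stairs => /andP[/eqP Hsz Hvd].
have Hh := vd_head Hvd; rewrite Hsz in Hh.
set h := head 0 s.
have -> : p.+2 - h = 1 + ((p - h) + 1) by lia.
rewrite iotaD big_cat /= big_cons big_nil iotaD big_cat /= big_cons big_nil.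
rewrite !Hsz ltnn /= !add0n -/h !addn1.
have -> : h.+1 + (p - h) = p.+1 by lia.
rewrite ltnn eqxx /= andbT subnn bin0n.
have -> : p.+1 - h = (p - h).+1 by lia.
have -> : h < p.+1 by lia.
rewrite andbF add1n add0n addn0 addnA; congr (_ + _); last by rewrite addn0.
congr (_ + _).
have Hp : p.+1 = (p - h) + h.+1 by lia.
rewrite -(Gsum (p - h) h.+1) -Hp big_distrr /=.
rewrite big_seq [in RHS]big_seq; apply: eq_bigr => v; rewrite mem_iota => Hv.
have -> : (h < v) && (v < p.+1) by apply/andP; lia.
have -> : (v == p.+1) = false by apply/eqP; lia.
by rewrite andbF add1n add0n.
Qed.

Lemma WrecS p r k z :
  W p.+1 r.+1 k z = W p r.+1 k z + W p r k z + Wd p r.+2 k z + Wd p r.+1 k z.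
Proof.
rewrite Wrec_gen.
under eq_bigr => s _ do rewrite hockey !binS !mulnDr /= muln0 addn0.
rewrite !big_split /= /W.
rewrite -!addnA; congr (_ + _); congr (_ + _).
case: k => [|k] /=.
  by rewrite !big1 // => s _.
by rewrite /W -big_split; apply: eq_bigr => s _; rewrite eqSS.
Qed.

Lemma Wrec0 p k z :
  W p.+1 0 k z = W p 0 k z + Zd p 0 k z + Wd p 1 k z.
Proof.
rewrite Wrec_gen.
under eq_bigr => s _ do rewrite sum1 bin0.
rewrite !big_split /= /W /Zd /Wd.
rewrite -!addnA; congr (_ + _).
  by apply: eq_bigr => s _; rewrite bin0.
rewrite [RHS]addnC; congr (_ + _).
  case: k => [|k] /=; first by rewrite big1 // => s _.
  by apply: eq_bigr => s _; rewrite eqSS bin1.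
case: z => [|z] /=; first by rewrite big1 // => s _; rewrite andbF.
by apply: eq_bigr => s _; rewrite eqSS bin0 muln1.
Qed.

Lemma WdS p r k z : Wd p r k.+1 z = W p r k z. Proof. by []. Qed.
Lemma Wd0 p r z : Wd p r 0 z = 0. Proof. by []. Qed.
Lemma ZdS p r k z : Zd p r k z.+1 = W p r k z. Proof. by []. Qed.

Lemma W0 r k z : W 0 r k z = ((k == 0) && (z == 0)) * 'C(0, r).
Proof. by rewrite /W /= big_cons big_nil addn0 !(eq_sym 0). Qed.

Lemma R1 p : forall r k z, W p r.+1 k z = Wd p r.+1 k z.+1 + W p r k z.+1.
Proof.
elim: p => [|p IH] r k z.
  rewrite /Wd !W0 bin0n /=.
  case: k => [|k]; rewrite ?W0 /= ?andbF ?muln0 //.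
rewrite WrecS.
case: k => [|k].
  rewrite !Wd0 add0n addn0 addn0.
  case: r => [|r].
    rewrite Wrec0 /Zd Wd0 addn0.
    have E1 := IH 0 0 z. rewrite Wd0 in E1. lia.
  rewrite WrecS !Wd0 !addn0.
  have E1 := IH r.+1 0 z. have E2 := IH r 0 z. rewrite Wd0 in E1. rewrite Wd0 in E2. lia.
rewrite !WdS WrecS.
have E1 := IH r k.+1 z. have E3 := IH r.+1 k z. have E4 := IH r k z.
rewrite WdS in E1.
case: r E1 E3 E4 => [|r] E1 E3 E4.
  rewrite Wrec0 ZdS WdS. lia.
have E2 := IH r k.+1 z. rewrite WdS in E2.
rewrite WrecS !WdS. lia.
Qed.

Definition T p k z := W p 0 k z.

Lemma Tloc p k z :
  T p.+1 k.+1 z + T p k z = Zd p 0 k.+1 z + T p k.+1 z + T p.+1 k z.+1.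
Proof.
rewrite /T Wrec0 WdS (R1 p 0 k z) Wrec0 ZdS.
have := Wrec0 p k z.+1. rewrite ZdS. lia.
Qed.

Lemma Tloc0 p z : T p.+1 0 z = T p 0 z + Zd p 0 0 z.
Proof. by rewrite /T Wrec0 Wd0 addn0. Qed.

Lemma T0 k z : T 0 k z = ((k == 0) && (z == 0)).
Proof. by rewrite /T W0 bin0 muln1. Qed.

Section RatPart.
Local Open Scope ring_scope.

Definition That (m k z : nat) : rat :=
  if k is k'.+1 then (z.+1)%:R / k%:R * ('C(m - z.+1, k'))%:R * ('C(m, k' + z.+2))%:R
  else ('C(m, z))%:R.

Lemma nz n : (n.+1)%:R != 0 :> rat. Proof. by rewrite pnatr_eq0. Qed.
Lemma nz1 (x : rat) : 0 <= x -> 1 + x != 0. Proof. move=> H; apply/eqP; lra. Qed.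
Lemma ge0n n : 0 <= n%:R :> rat. Proof. exact: ler0n. Qed.
Ltac nzt := repeat (apply/andP; split); rewrite ?nz1 ?ge0n ?nz //; try (apply/eqP; lra).

Lemma binr_left n k : ('C(n, k.+1))%:R = ((n%:R - k%:R) / (k.+1)%:R) * ('C(n, k))%:R :> rat.
Proof.
have H := mul_bin_left n k.
case: (leqP k n) => Hk.
  have : ((k.+1 * 'C(n, k.+1))%N%:R : rat) = ((n - k) * 'C(n, k))%N%:R by rewrite H.
  rewrite !natrM natrB // => E.
  have E' : ('C(n, k.+1))%:R = ((k.+1)%:R * ('C(n, k.+1))%:R) / (k.+1)%:R :> rat.
    by field; nzt.
  rewrite E' E; field; nzt.
by rewrite !bin_small ?mulr0 //; lia.
Qed.

Lemma binrS n k : ('C(n.+1, k.+1))%:R = ('C(n, k.+1))%:R + ('C(n, k))%:R :> rat.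
Proof. by rewrite binS natrD. Qed.

Lemma ThatLoc m k z :
  That m.+1 k.+1 z + That m k z =
  (if z is z'.+1 then That m k.+1 z' else 0) + That m k.+1 z + That m.+1 k z.+1.
Proof.
case: (ltnP m z.+1) => Hm.
  have Z : forall m' k' z', (m' < k' + z'.+2)%N -> That m' k'.+1 z' = 0.
    by move=> m' k' z' H; rewrite /That (bin_small H) mulr0.
  case: k => [|k]; case: z Hm => [|z] Hm.
  - rewrite !Z ?add0r ?addr0; try lia.
    have -> : m = 0%N by lia. by rewrite /That !bin0.
  - rewrite !Z ?add0r ?addr0; try lia.
    rewrite /That. case: (ltnP m z.+1) => H2.
      by rewrite !bin_small //; lia.
    have -> : m = z.+1 by lia.
    by rewrite !binn.
  - by rewrite !Z ?add0r ?addr0 //; lia.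
  - by rewrite !Z ?add0r ?addr0 //; lia.
have [A ->] : exists A, m = (A + z.+1)%N by exists (m - z.+1)%N; lia.
have f1 : ((A + z.+1).+1 - z.+1 = A.+1)%N by lia.
have f2 : ((A + z.+1) - z.+1 = A)%N by lia.
rewrite /That f1 f2.
case: k => [|k].
  case: z Hm f1 f2 => [|z] Hm f1 f2 /=; rewrite !bin0 !mulr1 ?divr1 ?add0n.
    by rewrite add0r !binrS bin0; ring.
  rewrite !binrS; ring.
have -> : ((A + z.+1).+1 - z.+2 = A)%N by lia.
have -> : (match z with 0%N => 0 | z'.+1 => z'.+1%:R / k.+2%:R * 'C(A + z.+1 - z'.+1, k.+1)%:R *
      'C(A + z.+1, k.+1 + z'.+2)%:R end : rat)
   = z%:R / k.+2%:R * 'C(A.+1, k.+1)%:R * 'C(A + z.+1, (k + z.+2))%:R.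
  case: z {Hm f1 f2} => [|z]; first by rewrite !mul0r.
  by congr (_ * _ * _%:R * _%:R); congr 'C(_, _); lia.
rewrite !addSn.
have -> : (k + z.+3 = (k + z.+2).+1)%N by rewrite !addnS.
rewrite !binrS !binr_left.
rewrite ?natrD !mulrSr ?natrD. have g1 := ge0n k. have g2 := ge0n z. field. by repeat (apply/andP; split); apply/eqP; lra.
Qed.

Lemma TT k : forall m z, (T m k z)%:R = That m k z.
Proof.
elim: k => [|k IHk] m.
  elim: m => [|m IHm] z.
    by rewrite T0 /That bin0n eqxx.
  rewrite Tloc0 /That natrD IHm /That /Zd.
  case: z => [|z]; first by rewrite !bin0 addr0.
  by rewrite -/(T m 0 z) IHm /That binS natrD.
elim: m => [|m IHm] z.
  by rewrite T0 /That (@bin_small 0 (k + z.+2)) ?mulr0 //; lia.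
have E := Tloc m k z.
have E' : ((T m.+1 k.+1 z)%:R + (T m k z)%:R : rat)
   = (Zd m 0 k.+1 z)%:R + (T m k.+1 z)%:R + (T m.+1 k z.+1)%:R.
  by rewrite -!natrD E.
rewrite !IHk IHm in E'.
have Hz : ((Zd m 0 k.+1 z)%:R : rat) = (if z is z'.+1 then That m k.+1 z' else 0).
  by case: z {E E'} => [|z] //=; rewrite -/(T m k.+1 z) IHm.
rewrite Hz -ThatLoc in E'.
exact: addIr E'.
Qed.

End RatPart.

Lemma card_ord_count m (P : pred nat) : #|[set i : 'I_m | P i]| = count P (iota 0 m).
Proof.
rewrite cardsE cardE /enum_mem size_filter -enumT.
by rewrite -val_enum_ord count_map.
Qed.

Lemma vd_nth s : vd s =
  all (fun i => (nth 0 s i.+1 <= nth 0 s i) && (nth 0 s i <= size s - i)) (iota 0 (size s)).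
Proof.
elim: s => [|v s IH] //=.
rewrite (@iotaDl 1 0) all_map subn0 IH -andbA.
have -> : nth 0 s 0 = head 0 s by case: s {IH}.
congr [&& _, _ & _].
Qed.

Lemma kk_nth s : kk s =
  count (fun i => (nth 0 s i.+1 < nth 0 s i) && (nth 0 s i < size s - i)) (iota 0 (size s)).
Proof.
elim: s => [|v s IH] //=.
rewrite (@iotaDl 1 0) count_map subn0 IH.
have -> : nth 0 s 0 = head 0 s by case: s {IH}.
congr (_ + _).
Qed.

Lemma zz_le s : zz s <= size s.
Proof. elim: s => [|v s IH] //=; case: (_ && _) => /=; lia. Qed.


Definition sl n (l : diagram n) : seq nat := [seq nat_of_ord (l i) | i <- enum 'I_(n - 1)].

Lemma size_sl n (l : diagram n) : size (sl l) = n - 1.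
Proof. by rewrite size_map size_enum_ord. Qed.

Lemma nth_sl n (l : diagram n) (i : 'I_(n - 1)) : nth 0 (sl l) i = l i.
Proof. by rewrite /sl (nth_map i) ?size_enum_ord // nth_ord_enum. Qed.

Lemma rowlenS n (l : diagram n) i : rowlen l i.+1 = nth 0 (sl l) i.
Proof.
rewrite /rowlen; case: insubP => [r Hi Hr | Hi].
  by rewrite -Hr nth_sl.
rewrite nth_default // size_sl; lia.
Qed.

Lemma sl_inj n : injective (@sl n).
Proof.
move=> l1 l2 E; apply/ffunP => i; apply/val_inj => /=.
by rewrite -!nth_sl E.
Qed.

Lemma stair_vd n (l : diagram n) : in_staircase l = vd (sl l).
Proof.
rewrite vd_nth size_sl /in_staircase.
apply/andP/allP.
  move=> [/forallP B /forallP M] i; rewrite mem_iota add0n => /andP[_ Hi].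
  have -> : nth 0 (sl l) i = l (Ordinal Hi) by rewrite -nth_sl.
  apply/andP; split; last by have := B (Ordinal Hi) => /=; lia.
  case: (ltnP i.+1 (n - 1)) => H2.
    rewrite -[i.+1]/(nat_of_ord (Ordinal H2)) nth_sl.
    by have := forallP (M (Ordinal Hi)) (Ordinal H2) => /implyP; apply => /=.
  by rewrite nth_default // size_sl.
move=> H.
have Hall : forall i, nth 0 (sl l) i.+1 <= nth 0 (sl l) i.
  move=> i; case: (ltnP i (n - 1)) => Hi.
    by have := H i; rewrite mem_iota add0n Hi => /(_ isT) /andP[].
  by rewrite !nth_default // size_sl; lia.
split.
  apply/forallP => i; have := H i; rewrite mem_iota add0n ltn_ord => /(_ isT) /andP[_].
  rewrite nth_sl; lia.
apply/forallP => i; apply/forallP => j; apply/implyP => Hij.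
rewrite -!nth_sl.
exact: (@homo_leq _ (fun i => nth 0 (sl l) i) (fun x y => y <= x) (@leqnn) (fun a b c H1 H2 => leq_trans H2 H1) Hall).
Qed.

Lemma low_kk n (l : diagram n.+1) : low_corners l = kk (sl l).
Proof.
rewrite kk_nth size_sl -card_ord_count /low_corners.
set s := sl l.
pose f (i : 'I_(n.+1 - 1)) : 'I_n.+1 * 'I_n.+1 := (inord i.+1, inord (nth 0 s i)).
have finj : injective f.
  move=> i1 i2 [] /(congr1 val) => /=; have := ltn_ord i1; have := ltn_ord i2; move=> h1 h2; rewrite !inordK; [|lia|lia].
  by move=> [] /val_inj.
rewrite -(card_imset _ finj); apply: eq_card => -[a b].
rewrite !inE /=.
apply/idP/imsetP.
  move=> /andP[Hc Hab]; move: Hc; rewrite /is_corner /in_diag.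
  case/and3P => /andP[Hb1 Hb2] H3 H4.
  case: a Hab Hb2 H3 H4 => [[|i] Ha] Hab Hb2 H3 H4 /=.
    by rewrite /rowlen /= in Hb2; lia.
  have E : nat_of_ord (Ordinal Ha) = i.+1 by []. rewrite E in Hb2 H3 H4 Hab. rewrite !rowlenS -/s in Hb2 H3 H4.
  have Hi : i < n.+1 - 1.
    case: (ltnP i (n.+1 - 1)) => // Hi.
    by rewrite nth_default ?size_sl in Hb2; lia.
  have Hbv : nat_of_ord b = nth 0 s i by lia.
  exists (Ordinal Hi).
    rewrite inE /=; apply/andP; split; lia.
  rewrite /f; congr (_, _); apply/val_inj; rewrite /= inordK //; lia.
move=> [i]; rewrite inE => /andP[P1 P2] [-> ->].
have Hi := ltn_ord i.
rewrite /is_corner /in_diag !inordK; try lia.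
rewrite !rowlenS -/s.
apply/andP; split; last by lia.
apply/and3P; split; try (apply/negP; lia).
Qed.

Lemma c_count_cnt n k : c_count n.+1 k = count (fun s => kk s == k) (stairs n).
Proof.
rewrite /c_count cardE -(size_map (@sl n.+1)) -size_filter.
apply: perm_size; apply: uniq_perm.
- by rewrite (map_inj_uniq (@sl_inj _)) enum_uniq.
- by rewrite filter_uniq // uniq_stairs.
move=> s; rewrite mem_filter; apply/mapP/andP.
  move=> [l]; rewrite mem_enum inE => /andP[H1 /eqP H2] ->.
  rewrite mem_stairs size_sl -stair_vd H1 -low_kk H2 eqxx; split => //.
  by rewrite andbT; apply/eqP; lia.
move=> [/eqP Hk]; rewrite mem_stairs => /andP[/eqP Hs Hv].
have Hb : forall i, i < n -> nth 0 s i < n.+1.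
  move=> i Hi; move: Hv; rewrite vd_nth Hs => /allP /(_ i).
  rewrite mem_iota add0n Hi => /(_ isT) /andP[_]; lia.
pose l : diagram n.+1 := [ffun i : 'I_(n.+1 - 1) => inord (nth 0 s i)].
have Hl : sl l = s.
  apply: (@eq_from_nth _ 0); first by rewrite size_sl Hs; lia.
  move=> i; rewrite size_sl => Hi.
  rewrite -[i]/(nat_of_ord (Ordinal Hi)) nth_sl ffunE inordK //.
  apply: Hb => /=; lia.
exists l => //.
by rewrite mem_enum inE stair_vd low_kk Hl Hv Hk eqxx.
Qed.

Lemma c_count_T n k : c_count n.+1 k = (\sum_(z < n.+1) T n k z)%N.
Proof.
rewrite c_count_cnt -sum1_count /T /W exchange_big /=.
rewrite big_mkcond /=; apply: eq_big_seq => s.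
rewrite mem_stairs => /andP[/eqP Hs _].
have Hz : zz s < n.+1 by have := zz_le s; rewrite Hs ltnS.
rewrite (bigD1 (Ordinal Hz)) //= big1.
  by rewrite eqxx andbT bin0 muln1 addn0; case: (kk s == k).
move=> z /eqP Hne; rewrite bin0 muln1.
case: (zz s =P z) => [E|]; last by rewrite andbF.
by exfalso; apply: Hne; apply/val_inj.
Qed.

Theorem proposition2p9 (n : nat) (hn : (2 <= n)%N) :
  (forall k : nat, (1 <= k)%N ->
     ((c_count n k)%:R : rat) =
       (\sum_(1 <= i < n - k)
          (i%:R / (n - i)%N%:R) * ('C(n - i, k))%:R * ('C(n - 1, k + i))%:R)%R) /\
  c_count n 0 = (2 ^ (n - 1))%N.
Proof.
case: n hn => [|n] // hn.
have Tb : forall z, T n 0 z = 'C(n, z).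
  move=> z; apply/eqP; rewrite -(eqr_nat rat) TT.
  by [].
split.
  case=> [|k] // _.
  rewrite c_count_T natr_sum.
  under eq_bigr => z _ do rewrite TT.
  rewrite big_add1 -(big_mkord xpredT (fun z => That n k.+1 z)).
  have HN : ((n.+1 - k.+1).-1 <= n.+1)%N by lia.
  rewrite (big_cat_nat (leq0n _) HN) /=.
  rewrite [X in (_ + X)%R = _]big1_seq ?addr0; last first.
    move=> z /andP[_]; rewrite mem_index_iota => /andP[Hz1 Hz2].
    by rewrite /That (@bin_small n (k + z.+2)) ?mulr0 //; lia.
  rewrite !big_seq; apply: eq_bigr => z; rewrite mem_index_iota => /andP[_ Hz].
  rewrite /That.
  have -> : (n.+1 - z.+1 = n - z)%N by lia.
  have -> : (n.+1 - 1 = n)%N by lia.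
  have -> : (k.+1 + z.+1 = k + z.+2)%N by lia.
  have Ha : (0 < n - z)%N by lia.
  have E : ((n - z) * 'C(n - z.+1, k) = k.+1 * 'C(n - z, k.+1))%N.
    by rewrite -mul_bin_diag; congr (_ * 'C(_, _)); lia.
  have E' : (('C(n - z, k.+1))%:R = ((n - z)%:R * ('C(n - z.+1, k))%:R / (k.+1)%:R : rat))%R.
    have E2 : (((k.+1 * 'C(n - z, k.+1))%N%:R : rat) = ((n - z) * 'C(n - z.+1, k))%N%:R)%R by rewrite E.
    rewrite !natrM in E2. rewrite -E2. field. by apply: nz1; apply: ge0n.
  rewrite E'.
  have Hnz : (((n - z)%:R : rat) != 0)%R by rewrite pnatr_eq0; lia.
  field. apply/andP; split => //. by apply: nz1; apply: ge0n.
rewrite c_count_T.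
under eq_bigr => z _ do rewrite Tb.
have := expnDn 1 1 n.
rewrite subn1 /=.
under eq_bigr => i _ do rewrite !exp1n !muln1.
by move=> <-.
Qed.
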